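(* Let $\mathcal{S}$ be a nonempty semigroup with operation $*$, and let $E(\mathcal{S})$ be its set of idempotents. Suppose $|\mathcal{S}\setminus E(\mathcal{S})|$ is finite. Then every $\mathcal{S}$-valued sequence $T=a_1a_2\cdots a_{\ell}$ of length $\ell=|\mathcal{S}\setminus E(\mathcal{S})|+1$ is not strongly idempotent-product free; that is, there exist indices $1\le i_1<i_2<\cdots<i_t\le \ell$ with $t\ge 1$ such that $a_{i_1}*a_{i_2}*\cdots*a_{i_t}\in E(\mathcal{S})$.
   Context: An element $x$ of a semigroup $\mathcal{S}$ is an idempotent if $x*x=x$. A sequence means a finite ordered list of (not necessarily distinct) elements of $\mathcal{S}$; a subsequence keeps terms in their original order. A sequence is strongly idempotent-product free if no nonempty subsequence has product (taken in the natural order of the sequence) equal to an idempotent. *)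

(* Defs.v *)
From mathcomp Require Import all_boot.
From Stdlib Require List.
Set Implicit Arguments. Unset Strict Implicit. Unset Printing Implicit Defensive.

Section Semigroup.
Variables (S : Type) (op : S -> S -> S).

Definition is_idempotent (x : S) : Prop := op x x = x.

Definition seq_prod (s : seq S) : option S :=
  match s with
  | [::] => None
  | x :: r => Some (foldl op x r)
  end.

(* A subsequence of T is [mask m T] with [size m = size T].
   T is strongly idempotent-product free if no nonempty subsequence has
   is_idempotent product. *)
Definition strongly_idempotent_product_free (T : seq S) : Prop :=
  forall m : bitseq, size m = size T ->
  forall p, seq_prod (mask m T) = Some p -> ~ is_idempotent p.

End Semigroup.

(* Main.v *)
Require Import Defs.
From mathcomp Require Import all_boot.
From Stdlib Require List.
From Stdlib Require Import Classical ClassicalEpsilon Lia.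
From mathcomp Require Import zify.

Section Aux.
Variables (S : Type) (op : S -> S -> S).
Hypothesis op_assoc : forall x y z, op x (op y z) = op (op x y) z.

Fixpoint pw (a : S) (n : nat) : S :=
  match n with 0 => a | n'.+1 => op (pw a n') a end.

Lemma pw_add a m n : op (pw a m) (pw a n) = pw a (m + n).+1.
Proof.
elim: n => [|n IH] /=; first by rewrite addn0.
by rewrite op_assoc IH addnS.
Qed.

Lemma pw_period a i p : pw a i = pw a (i + p).+1 ->
  forall n k, pw a (i + n) = pw a (i + n + k * p.+1).
Proof.
move=> H n k; elim: k => [|k IH]; first by rewrite mul0n addn0.
have E : forall m, pw a (i + m) = pw a (i + m + p.+1).
  elim=> [|m IHm]; first by rewrite addn0 H addnS.
  by rewrite addnS /= IHm.
rewrite IH; have := E (n + k * p.+1); rewrite !addnA => ->; congr pw; lia.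
Qed.

Lemma pw_idem a i p : pw a i = pw a (i + p).+1 ->
  is_idempotent op (pw a ((i.+1 * p.+1).-1)).
Proof.
move=> H; rewrite /is_idempotent pw_add.
have E := @pw_period a i p H ((i.+1 * p.+1).-1 - i) i.+1.
have e1 : i + ((i.+1 * p.+1).-1 - i) = (i.+1 * p.+1).-1 by nia.
have e2 : i + ((i.+1 * p.+1).-1 - i) + i.+1 * p.+1 =
   ((i.+1 * p.+1).-1 + (i.+1 * p.+1).-1).+1 by nia.
by rewrite e2 e1 in E.
Qed.
End Aux.

Section Pig.
Variables (S : Type) (op : S -> S -> S).

Fixpoint Lp (a : S) (n : nat) : list S :=
  match n with 0 => [:: @pw S op a 0] | n'.+1 => @pw S op a n'.+1 :: Lp a n' end.

Lemma Lp_in a n x : List.In x (Lp a n) -> exists j, j <= n /\ x = @pw S op a j.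
Proof.
elim: n => [|n IH] /=.
  by case=> // <-; exists 0.
case=> [<-|/IH [j [hj ->]]]; first by exists n.+1.
by exists j; split=> //; apply: leqW.
Qed.

Lemma Lp_len a n : length (Lp a n) = n.+1.
Proof. by elim: n => //= n ->. Qed.

Lemma pig (a : S) (l : list S) : (forall n, List.In (@pw S op a n) l) ->
  exists i p, @pw S op a i = @pw S op a (i + p).+1.
Proof.
move=> Hin; apply: NNPP => Hno.
have Hinj : forall i j, i < j -> @pw S op a i <> @pw S op a j.
  move=> i j hij e; apply: Hno; exists i, (j - i.+1).
  by rewrite e; congr pw; lia.
have ND : forall n, List.NoDup (Lp a n).
  elim=> [|n IH] /=; first by constructor; [case| constructor].
  constructor=> // /Lp_in [j [hj e]].
  by apply: (Hinj j n.+1) => //; rewrite e.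
have Hincl : List.incl (Lp a (length l)) l.
  by move=> x /Lp_in [j [_ ->]].
have := List.NoDup_incl_length (ND (length l)) Hincl.
rewrite Lp_len; lia.
Qed.
End Pig.

Section InA.
Variables (S : Type) (op : S -> S -> S) (T : seq S) (x0 : S).

Definition InA k x := exists m : bitseq, size m = k /\
  seq_prod op (mask m (take k T)) = Some x.

Lemma seq_prod_rcons s x a : seq_prod op s = Some x ->
  seq_prod op (s ++ [:: a]) = Some (op x a).
Proof.
case: s => //= y s [<-]; by rewrite cats1 foldl_rcons.
Qed.

Lemma InA_free k x : k <= size T -> InA k x ->
  strongly_idempotent_product_free op T -> ~ is_idempotent op x.
Proof.
move=> hk [m [hm hp]] F; apply: (F (m ++ nseq (size T - k) false)).
  by rewrite size_cat size_nseq hm subnKC.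
rewrite -(cat_take_drop k T) mask_cat ?size_take ?hm; last first.
  by case: ltnP => // h; apply/eqP; rewrite eqn_leq hk h.
by rewrite mask_false cats0.
Qed.

Lemma InA_mono k x : k < size T -> InA k x -> InA k.+1 x.
Proof.
move=> hk [m [hm hp]]; exists (rcons m false); split; first by rewrite size_rcons hm.
rewrite (take_nth x0 hk) mask_rcons ?cats0 // size_take hk //.
Qed.

Lemma InA_last k : k < size T -> InA k.+1 (nth x0 T k).
Proof.
move=> hk; exists (rcons (nseq k false) true); split; first by rewrite size_rcons size_nseq.
rewrite (take_nth x0 hk) mask_rcons ?mask_false // size_take hk size_nseq //.
Qed.

Lemma InA_mul k x : k < size T -> InA k x -> InA k.+1 (op x (nth x0 T k)).
Proof.
move=> hk [m [hm hp]]; exists (rcons m true); split; first by rewrite size_rcons hm.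
rewrite (take_nth x0 hk) mask_rcons ?size_take ?hk //.
exact: seq_prod_rcons.
Qed.
End InA.

Arguments InA_free {S op T k x}.
Arguments InA_mono {S op T} x0 {k x}.
Arguments InA_last {S op T} x0 {k}.
Arguments InA_mul {S op T} x0 {k x}.
Arguments pw_idem {S op} op_assoc {a i p}.

Lemma count_in (T : Type) (P : pred T) (l : list T) x :
  List.In x l -> P x -> 0 < count P l.
Proof.
elim: l => //= y l IH [<- ->//|/IH h px]; rewrite addn_gt0 h ?px ?orbT //.
Qed.

Lemma count_eq_sub (T : Type) (P Q : pred T) (l : list T) :
  (forall x, P x -> Q x) -> count P l = count Q l ->
  forall x, List.In x l -> Q x -> P x.
Proof.
move=> PQ; elim: l => //= y l IH e x.
have hs := sub_count PQ l.
move: e; case Py: (P y); case Qy: (Q y); rewrite /= ?add0n ?add1n => e.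
- case: e => /IH h [<- //|/h //].
- by move: (PQ _ Py); rewrite Qy.
- lia.
- move=> [<-|/(IH e) //]; by rewrite Qy.
Qed.

Theorem proposition1p1 (S : Type) (op : S -> S -> S)
  (op_assoc : forall x y z, op x (op y z) = op (op x y) z)
  (x0 : S)
  (nonE : list S) (nonE_nodup : List.NoDup nonE)
  (nonE_spec : forall x, List.In x nonE <-> ~ is_idempotent op x)
  (T : seq S) (HT : size T = (size nonE).+1) :
  ~ strongly_idempotent_product_free op T.
Proof.
move=> F.
pose Ab k y : bool := if excluded_middle_informative (@InA S op T k y) then true else false.
have AbP : forall k y, Ab k y <-> @InA S op T k y.
  by move=> k y; rewrite /Ab; case: excluded_middle_informative.
pose f k := count (Ab k) nonE.
have inE : forall k x, k <= size T -> @InA S op T k x -> List.In x nonE.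
  by move=> k x hk hA; apply/nonE_spec; apply: (InA_free hk hA F).
have fle : forall k, f k <= size nonE by move=> k; apply: count_size.
have f1 : 0 < f 1.
  have hA := @InA_last S op T x0 0 ltac:(by rewrite HT).
  apply: (@count_in S (Ab 1) nonE _ (inE 1 _ ltac:(by rewrite HT) hA)).
  by apply/AbP.
have fmono : forall k, k < size T -> f k <= f k.+1.
  move=> k hk; apply: sub_count => y /AbP h; apply/AbP; exact: (InA_mono x0).
have [k [hk1 [hkN hfk]]] : exists k, 0 < k /\ k <= size nonE /\ f k.+1 = f k.
  apply: NNPP => Hno.
  have G : forall n, n <= size nonE -> n < f n.+1.
    elim=> [//|n IH hn].
    have h1 := IH (ltnW hn).
    have h2 := fmono n.+1 ltac:(rewrite HT; lia).
    have : f n.+2 <> f n.+1 by move=> e; apply: Hno; exists n.+1.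
    lia.
  have := G _ (leqnn _); have := fle (size nonE).+1; lia.
have back : forall y, @InA S op T k.+1 y -> @InA S op T k y.
  move=> y hy; apply/AbP.
  have hsub : forall x, Ab k x -> Ab k.+1 x.
    move=> x /AbP h; apply/AbP; apply: (InA_mono x0) => //; rewrite HT; lia.
  apply: (@count_eq_sub S (Ab k) (Ab k.+1) nonE hsub (esym hfk)); last by apply/AbP.
  apply: (inE k.+1) => //; rewrite HT; lia.
have hk : k < size T by rewrite HT; lia.
set a := nth x0 T k.
have Hpw : forall n, @InA S op T k (@pw S op a n).
  elim=> [|n IH] /=; first exact: back (InA_last x0 hk).
  apply: back; exact: (InA_mul x0).
have [i [p hip]] : exists i p, @pw S op a i = @pw S op a (i + p).+1.
  apply: (@pig S op a nonE) => n; apply: (inE k) => //; exact: ltnW.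
have := pw_idem op_assoc hip.
apply: (InA_free (ltnW hk) (Hpw _) F).
Qed.
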